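(* Let $(X,\mathcal{M},\mu)$ be a measure space and $\Phi$ an $N^*$-function with complementary $N^*$-function $\widehat\Phi$. Then for every $f\in L_\Phi(X)$ and $g\in L_{\widehat\Phi}(X)$, $$\int_X\Phi(f)\,\widehat\Phi(g)\,d\mu\le\int_X|f|\,d\mu+\int_X|g|\,d\mu .$$
   Context: An $N^*$-function is a function $\Phi:\mathbb{R}\to\mathbb{R}$ of the form $\Phi(x)=\int_0^{|x|}p(t)\,dt<+\infty$ for all $x$, where $p:[0,\infty)\to[0,\infty]$ is right-continuous, positive on $(0,\infty)$, non-increasing, and satisfies $\lim_{t\to0^+}p(t)=+\infty$ and $\lim_{t\to+\infty}p(t)=0$. $\Phi^{-1}:[0,\infty)\to[0,\infty)$ denotes the inverse of $\Phi|_{[0,\infty)}$; it is an $N$-function $M(t)=\int_0^{|t|}m(s)ds$ with $m$ non-decreasing right-continuous. The conjugate $N$-function is $\overline{M}(t)=\int_0^{|t|}\overline m(s)ds$ with $\overline m(t)=\sup\{s: m(s)\le t\}$. The complementary $N^*$-function is $\widehat\Phi=(\overline{\Phi^{-1}})^{-1}$ (inverse on $[0,\infty)$, extended evenly). $L_\Phi(X)$ is the space of (classes modulo a.e. equality of) measurable $f$ with $\int_X\Phi(f)\,d\mu<\infty$. *)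

(* Defs.v *)
From HB Require Import structures.
From mathcomp Require Import all_boot all_order all_algebra.
From mathcomp Require Import all_classical all_reals all_analysis.
Set Implicit Arguments. Unset Strict Implicit. Unset Printing Implicit Defensive.
Import Order.TTheory GRing.Theory Num.Theory.
Import numFieldNormedType.Exports.
Local Open Scope classical_set_scope.
Local Open Scope ring_scope.

Section Orlicz.
Variable R : realType.

Definition segm (x : R) : set R := `[0, `|x|]%classic.

(** [p] is an admissible density for an N*-function [Phi] and
    [Phi x = \int_0^{|x|} p t dt < +oo] for all x. [p : [0,oo) -> [0,+oo]]
    is modelled as [R -> \bar R]; only its values on [0,oo) matter. *)
Definition Nstar_density (p : R -> \bar R) :=
  [/\ (forall t, 0 <= t -> (0 <= p t)%E),
      (forall t, 0 < t -> (0 < p t)%E),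
      (forall s t, 0 <= s -> s <= t -> (p t <= p s)%E),
      (forall t, 0 <= t -> (p x @[x --> t ^'+] --> p t)) &
      (p x @[x --> 0 ^'+] --> +oo%E) /\
      (p x @[x --> +oo] --> 0%E)].

Definition Nstar_function (Phi : R -> R) :=
  exists p : R -> \bar R, Nstar_density p /\
    forall x : R, (\int[lebesgue_measure]_(t in segm x) p t < +oo)%E /\
              Phi x = fine (\int[lebesgue_measure]_(t in segm x) p t).

Definition inverse_on_nonneg (F G : R -> R) :=
  (forall x, 0 <= x -> 0 <= F x /\ G (F x) = x) /\
  (forall y, 0 <= y -> 0 <= G y /\ F (G y) = y).

Definition conj_density (m : R -> R) (t : R) : R :=
  sup [set s | 0 <= s /\ m s <= t].

Definition conj_Nfunction (m : R -> R) (t : R) : R :=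
  fine (\int[lebesgue_measure]_(s in segm t) (conj_density m s)%:E)%E.

(** [Phihat] is the complementary N*-function of [Phi]:
    M = Phi^{-1} (on [0,oo)) is written M t = \int_0^{|t|} m with m
    non-decreasing and right-continuous on [0,oo); then Phihat is the
    inverse on [0,oo) of the conjugate N-function Mbar, extended evenly. *)
Definition complementary_Nstar (Phi Phihat : R -> R) :=
  exists (M m : R -> R),
    [/\ inverse_on_nonneg Phi M,
        (forall t : R, M t = fine (\int[lebesgue_measure]_(s in segm t) (m s)%:E)%E),
        (forall s t, 0 <= s -> s <= t -> m s <= m t),
        (forall t, 0 <= t -> (m x @[x --> t ^'+] --> m t)) &
        inverse_on_nonneg (conj_Nfunction m) Phihat /\
        (forall x, Phihat (- x) = Phihat x)].

Definition in_LPhi d (T : measurableType d) (mu : {measure set T -> \bar R})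
  (Phi : R -> R) (f : T -> R) :=
  measurable_fun setT f /\ (\int[mu]_x (Phi (f x))%:E < +oo)%E.

End Orlicz.

(* Main.v *)
Require Import Defs.
From HB Require Import structures.
From mathcomp Require Import all_boot all_order all_algebra.
From mathcomp Require Import all_classical all_reals all_analysis.
From mathcomp Require Import measurable_realfun.
From mathcomp Require Import ring lra.
Import Order.TTheory GRing.Theory Num.Theory.
Import numFieldNormedType.Exports.
Local Open Scope classical_set_scope.
Local Open Scope ring_scope.
Lemma step_lb (R : realType) (h : R -> R) (p e : nat -> R) (N : nat) :
  measurable_fun setT h -> (forall x, 0 <= h x) ->
  (forall k, p k <= p k.+1) -> (forall k, 0 <= e k) ->
  (forall k x, p k <= x -> x < p k.+1 -> e k <= h x) ->
  ((\sum_(k < N) e k * (p k.+1 - p k))%:E <=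
    \int[lebesgue_measure]_(x in `[p 0%N, p N[) (h x)%:E)%E.
Proof.
move=> mh h0 pnd e0 eh.
have mhE : forall D : set R, measurable_fun D (EFin \o h).
  move=> D; apply: measurable_funTS; exact: measurableT_comp.
have pmon : forall i j, (i <= j)%N -> p i <= p j.
  move=> i j /subnK <-; elim: (j - i)%N => [|k IH]; first by rewrite add0n.
  by rewrite addSn (le_trans IH).
elim: N => [|N IH].
  by rewrite big_ord0; apply: integral_ge0 => x _; rewrite lee_fin.
rewrite big_ord_recr /= EFinD.
rewrite (@itv_bndbnd_setU _ _ _ (BLeft (p N))); last 2 first.
- by rewrite bnd_simp pmon.
- by rewrite bnd_simp pnd.
rewrite ge0_integral_setU //; last 2 first.
- by move=> x _; rewrite lee_fin.
- apply/disj_setPS => x [] /=; rewrite !in_itv /= => /andP[_ a] /andP[b _].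
  by move: (lt_le_trans a b); rewrite ltxx.
apply: leeD => //.
have -> : ((e N * (p N.+1 - p N))%:E =
  \int[lebesgue_measure]_(x in `[p N, p N.+1[) (cst (e N)%:E) x)%E.
  rewrite integral_cst //=. rewrite (lebesgue_measure_itv (Interval (BLeft (p N)) (BLeft (p N.+1)))) /= lte_fin.
  case: ltP => H; first by rewrite -EFinD -EFinM.
  have -> : p N.+1 = p N by apply/le_anti; rewrite H pnd.
  by rewrite subrr mulr0 mule0.
apply: ge0_le_integral => //=.
all: first [ by move=> x _ /=; rewrite lee_fin | exact: measurable_cst | exact: mhE | by move=> x /=; rewrite in_itv /= => /andP[a b]; rewrite lee_fin eh ].
Qed.
Section mbar.
Variable R : realType.
Variable m : R -> R.
Hypothesis mnd : forall s t, 0 <= s -> s <= t -> m s <= m t.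
Hypothesis munb : forall t, exists s, 0 <= s /\ t < m s.

Lemma mbar_ge0 t : 0 <= conj_density m t.
Proof.
rewrite /conj_density.
have [hs|nhs] := pselect (has_sup [set s | 0 <= s /\ m s <= t]).
  have [[s sE] _] := hs; have [s0 ms] := sE.
  by apply: le_trans s0 _; apply: sup_upper_bound.
by rewrite sup_out.
Qed.

Lemma mbar_bnd t : has_ubound [set s | 0 <= s /\ m s <= t].
Proof.
have [s0 [s00 ts0]] := munb t.
exists s0 => s [s_ge0 mst].
rewrite leNgt; apply/negP => s0s.
have := mnd _ _ s00 (ltW s0s); rewrite leNgt => /negP; apply.
exact: le_lt_trans mst ts0.
Qed.

Lemma mbar_ub s t : 0 <= s -> m s <= t -> s <= conj_density m t.
Proof.
move=> s0 mst; apply: ub_le_sup; first exact: mbar_bnd.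
by split.
Qed.

Lemma mbar_nd : {homo conj_density m : x y / x <= y}.
Proof.
move=> x y xy.
have [[s [s0 msx]]|] := pselect (exists s, 0 <= s /\ m s <= x).
  apply: ge_sup; first by exists s.
  move=> r [r0 mrx]; apply: mbar_ub => //; exact: le_trans mrx xy.
move=> nE; rewrite /conj_density.
have -> : [set s | 0 <= s /\ m s <= x] = set0.
  by apply/seteqP; split => // r [r0 mrx]; apply: nE; exists r.
by rewrite sup0 mbar_ge0.
Qed.

Lemma mbar_meas : measurable_fun setT (conj_density m).
Proof. apply: nondecreasing_measurable => // x y xy; exact: mbar_nd. Qed.

End mbar.
Lemma abel_sum (R : realType) (c : R) (q : nat -> R) (N : nat) :
  \sum_(k < N) (k%:R * c) * (q k.+1 - q k) =
  c * (N%:R * q N - \sum_(k < N) q k.+1).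
Proof.
elim: N => [|N IH]; first by rewrite !big_ord0 mul0r subr0 mulr0.
rewrite !big_ord_recr /= IH -addn1 natrD.
ring.
Qed.

Lemma telesc (R : realType) (c : nat -> R) (n : nat) :
  \sum_(k < n) (c k - c k.+1) = c 0%N - c n.
Proof.
elim: n => [|n IH]; first by rewrite big_ord0 subrr.
rewrite big_ord_recr /= IH; ring.
Qed.

Lemma archi_le (R : realType) (x y K : R) : 0 <= K ->
  (forall n : nat, (0 < n)%N -> x <= y + K / n%:R) -> x <= y.
Proof.
move=> K0 H; apply/ler_addgt0Pr => e e0.
pose n := (Num.truncn (K / e)).+1.
apply: (le_trans (H n _)) => //.
rewrite lerD2l.
have n0 : 0 < n%:R :> R by rewrite ltr0n.
rewrite ler_pdivrMr // -ler_pdivrMl //.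
rewrite mulrC; apply/ltW; exact: archimedean.Num.Theory.truncnS_gt.
Qed.

Lemma fine_ge (R : realType) (x : R) (y : \bar R) :
  (x%:E <= y)%E -> (y < +oo)%E -> x <= fine y.
Proof. by case: y => [r| |] //=; rewrite lee_fin. Qed.

Lemma young (R : realType) (m : R -> R) (u v : R) :
  (forall s t, 0 <= s -> s <= t -> m s <= m t) ->
  (forall s, 0 <= s -> 0 <= m s) ->
  (forall t, exists s, 0 <= s /\ t < m s) ->
  0 <= u -> 0 <= v ->
  u * v <= fine (\int[lebesgue_measure]_(s in segm u) (m s)%:E)%E
           + conj_Nfunction m v.
Proof.
move=> mnd m0 munb u0 v0.
pose m' := fun x : R => m (Order.max x 0).
have mx0 (x : R) : 0 <= Order.max x 0 by rewrite le_max lexx orbT.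
have m'nd : {homo m' : x y / x <= y}.
  by move=> x y xy; apply: mnd => //; apply: le_max2.
have m'meas : measurable_fun setT m' by apply: nondecreasing_measurable.
have m'0 (x : R) : 0 <= m' x by apply: m0.
have segmE (w : R) : 0 <= w -> segm w = `[0, w]%classic.
  by move=> w0; rewrite /segm ger0_norm.
have I1E : (\int[lebesgue_measure]_(s in segm u) (m s)%:E =
            \int[lebesgue_measure]_(s in `[0%R, u]) (m' s)%:E)%E.
  rewrite segmE //; apply: eq_integral => x; rewrite inE /= in_itv /= => /andP[x0 _].
  by rewrite /m' (max_idPl x0).
have mbmeas := @mbar_meas R m mnd munb.
have mbnd := @mbar_nd R m mnd munb.
have mbub := @mbar_ub R m mnd munb.
have mb0 := @mbar_ge0 R m.
have I1fin : (\int[lebesgue_measure]_(s in segm u) (m s)%:E < +oo)%E.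
  have H1 : (\int[lebesgue_measure]_(s in `[0%R, u]) (m' s)%:E <=
     \int[lebesgue_measure]_(s in `[0%R, u]) (cst (m u)%:E) s)%E.
    apply: ge0_le_integral => //=.
    all: try (by move=> *; rewrite lee_fin m'0).
    all: try (by apply: measurable_funTS; exact: measurableT_comp).
    move=> x; rewrite in_itv /= => /andP[x0 xu].
    rewrite lee_fin /m' (max_idPl x0); exact: mnd.
  rewrite I1E; apply: le_lt_trans H1 _.
  rewrite integral_cst //= (lebesgue_measure_itv (Interval (BLeft 0) (BRight u))) /=.
  by case: ifP => _; [rewrite -EFinD -EFinM ltry | rewrite mule0 ltry].
have I2fin : (\int[lebesgue_measure]_(s in segm v) (conj_density m s)%:E < +oo)%E.
  have H1 : (\int[lebesgue_measure]_(s in `[0%R, v]) (conj_density m s)%:E <=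
     \int[lebesgue_measure]_(s in `[0%R, v]) (cst (conj_density m v)%:E) s)%E.
    apply: ge0_le_integral => //=.
    all: try (by move=> *; rewrite lee_fin mb0).
    all: try (by apply: measurable_funTS; exact: measurableT_comp).
    move=> x; rewrite in_itv /= => /andP[x0 xu].
    rewrite lee_fin; exact: mbnd.
  rewrite segmE //; apply: le_lt_trans H1 _.
  rewrite integral_cst //= (lebesgue_measure_itv (Interval (BLeft 0) (BRight v))) /=.
  by case: ifP => _; [rewrite -EFinD -EFinM ltry | rewrite mule0 ltry].
apply: (@archi_le _ _ _ (u * (m u - m 0))).
  by rewrite mulr_ge0 // subr_ge0 mnd.
move=> n n0.
pose hh := u / n%:R.
have n0R : 0 < n%:R :> R by rewrite ltr0n.
have hh0 : 0 <= hh by rewrite /hh divr_ge0 // ltW.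
have hhn : n%:R * hh = u by rewrite /hh mulrC -mulrA mulVf ?mulr1 // gt_eqF.
have kh0 k : 0 <= k%:R * hh by rewrite mulr_ge0.
have khnd k : k%:R * hh <= k.+1%:R * hh by rewrite ler_wpM2r // ler_nat.
have A : \sum_(k < n) m (k%:R * hh) * hh <= fine (\int[lebesgue_measure]_(s in segm u) (m s)%:E)%E.
  apply: fine_ge => //.
  have := @step_lb R m' (fun k => k%:R * hh) (fun k => m (k%:R * hh)) n m'meas m'0 khnd
    (fun k => m0 _ (kh0 k)).
  have Hc : forall k x, k%:R * hh <= x -> x < k.+1%:R * hh -> m (k%:R * hh) <= m' x.
    move=> k x kx _; apply: mnd => //; apply: le_trans kx _; by rewrite le_max lexx.
  move=> /(_ Hc); rewrite mul0r hhn => H.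
  rewrite I1E; apply: le_trans (le_trans _ H) _.
    rewrite lee_fin le_eqVlt; apply/orP; left; apply/eqP/eq_bigr => k _; congr (_ * _).
    by rewrite -addn1 natrD mulrDl mul1r addrAC subrr add0r.
  apply: ge0_subset_integral => //=.
  - apply: measurable_funTS; exact: measurableT_comp.
  - by move=> x _; rewrite lee_fin.
  - by move=> x /=; rewrite !in_itv /= => /andP[-> /ltW].
pose q k := if (k <= n)%N then Order.min (m (k%:R * hh)) v else v.
have qv k : q k <= v by rewrite /q; case: ifP => _ //; rewrite ge_min lexx orbT.
have qnd k : q k <= q k.+1.
  rewrite /q; case: (leqP k.+1 n) => [kn|nk].
    rewrite (ltnW kn) le_min !ge_min lexx !orbT andbT mnd //.
  exact: qv.
have Hq : forall k x, q k <= x -> x < q k.+1 -> k%:R * hh <= conj_density m x.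
  move=> k x qkx xqk.
  have xv : x < v by exact: lt_le_trans xqk (qv _).
  move: qkx; rewrite /q; case: ifP => _.
    rewrite ge_min => /orP[mkx|vx]; last by move: (le_lt_trans vx xv); rewrite ltxx.
    exact: mbub.
  by move=> vx; move: (le_lt_trans vx xv); rewrite ltxx.
have B : \sum_(k < n.+1) k%:R * hh * (q k.+1 - q k) <= conj_Nfunction m v.
  apply: fine_ge => //.
  have := @step_lb R (conj_density m) q (fun k => k%:R * hh) n.+1 mbmeas mb0 qnd kh0 Hq.
  move=> H; apply: le_trans H _.
  rewrite segmE //; apply: ge0_subset_integral => //=.
  - apply: measurable_funTS; exact: measurableT_comp.
  - by move=> x _; rewrite lee_fin.
  - move=> x /=; rewrite !in_itv /= => /andP[qx xq]; apply/andP; split.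
      by apply: le_trans qx; rewrite /q /= le_min m0 // v0.
    by apply: ltW; apply: lt_le_trans xq (qv _).
have Bs : \sum_(k < n.+1) k%:R * hh * (q k.+1 - q k) >=
          hh * (n%:R * v - \sum_(k < n) m (k.+1%:R * hh)).
  rewrite abel_sum big_ord_recr /=.
  have -> : q n.+1 = v by rewrite /q ltnn.
  apply: ler_wpM2l => //.
  have -> : n.+1%:R * v - (\sum_(i < n) q i.+1 + v) = n%:R * v - \sum_(i < n) q i.+1.
    by rewrite -addn1 natrD; ring.
  rewrite lerD2l lerN2.
  by apply: ler_sum => k _; rewrite /q ltn_ord ge_min lexx.
have Tel := @telesc R (fun k => m (k%:R * hh)) n.
simpl in Tel; rewrite mul0r hhn in Tel.
have Asum : \sum_(k < n) m (k%:R * hh) * hh = hh * \sum_(k < n) m (k%:R * hh).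
  by rewrite mulr_sumr; apply: eq_bigr => k _; rewrite mulrC.
rewrite -/(conj_Nfunction m v).
apply: le_trans (lerD (lerD A B) (lexx (u * (m u - m 0) / n%:R))).
apply: le_trans (lerD (lerD (lexx _) Bs) (lexx _)).
rewrite Asum.
have : \sum_(k < n) m (k%:R * hh) - \sum_(k < n) m (k.+1%:R * hh) = m 0 - m u.
  by rewrite -sumrB Tel.
move=> E.
have -> : u * (m u - m 0) / n%:R = hh * (m u - m 0) by rewrite /hh; field; rewrite gt_eqF.
rewrite -hhn.
have -> : hh * \sum_(k < n) m (k%:R * hh) + hh * (n%:R * v - \sum_(k < n) m (k.+1%:R * hh)) + hh * (m (n%:R * hh) - m 0)
  = hh * n%:R * v + hh * ((\sum_(k < n) m (k%:R * hh) - \sum_(k < n) m (k.+1%:R * hh)) + (m (n%:R * hh) - m 0)) by ring.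
rewrite hhn E [hh * n%:R]mulrC hhn.
have -> : m 0 - m u + (m u - m 0) = 0 by ring.
by rewrite mulr0 addr0.
Qed.
Lemma le_ge0_int d (T : measurableType d) (R : realType)
  (mu : {measure set T -> \bar R}) (f1 f2 : T -> \bar R) :
  (forall x, (0 <= f1 x)%E) -> (forall x, (f1 x <= f2 x)%E) ->
  (\int[mu]_x f1 x <= \int[mu]_x f2 x)%E.
Proof.
move=> f10 f12.
have f20 x : (0 <= f2 x)%E by apply: le_trans (f12 x).
rewrite !ge0_integralTE//.
apply: ereal_sup_le => _ [h /= hf <-]; exists h => //= x.
exact: le_trans (hf x) (f12 x).
Qed.

Lemma le_ge0_intD d (T : measurableType d) (R : realType)
  (mu : {measure set T -> \bar R}) (D : set T) (f1 f2 : T -> \bar R) :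
  (forall x, D x -> (0 <= f1 x)%E) -> (forall x, D x -> (f1 x <= f2 x)%E) ->
  (\int[mu]_(x in D) f1 x <= \int[mu]_(x in D) f2 x)%E.
Proof.
move=> f10 f12; rewrite !(integral_mkcond D); apply: le_ge0_int => x;
  rewrite /patch; case: ifP => // /set_mem Dx; [exact: f10 | exact: f12].
Qed.

Lemma m0_ge0 (R : realType) (m : R -> R) :
  (forall s t, 0 <= s -> s <= t -> m s <= m t) ->
  (m x @[x --> 0 ^'+] --> m 0) ->
  (forall t, 0 <= t -> 0 <= fine (\int[lebesgue_measure]_(s in segm t) (m s)%:E)%E) ->
  0 <= m 0.
Proof.
move=> mnd mc Mge0.
rewrite leNgt; apply/negP => m0n.
have H : \forall t \near 0^'+, m t < 0 := cvgr_lt _ mc _ m0n.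
near (0:R)^'+ => t.
have t0 : 0 < t by near: t; exact: nbhs_right_gt.
have mt : m t < 0 by near: t; exact: H.
have := Mge0 t (ltW t0).
have segmE : segm t = `[0%R, t]%classic by rewrite /segm gtr0_norm.
have Dm x : x \in `[0, t] -> m 0 <= m x /\ m x <= m t.
  by rewrite in_itv /= => /andP[x0 xt]; split; apply: mnd.
pose J := (\int[lebesgue_measure]_(x in `[0%R, t]) (- m x)%:E)%E.
have IJ : (\int[lebesgue_measure]_(s in segm t) (m s)%:E = - J)%E.
  rewrite /J -integralN; last first.
    apply: fin_num_adde_defl.
    have -> : (\int[lebesgue_measure]_(x in `[0%R, t]) ((fun x => (- m x)%:E)^\- x) = 0)%E.
      rewrite -(integral0 lebesgue_measure `[0%R, t]%classic); apply: eq_integral.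
      apply: ge0_funenegE => x xD; rewrite lee_fin oppr_ge0.
      have [_ ] := Dm x xD; move=> mxt; exact: ltW (le_lt_trans mxt mt).
    by rewrite oppe0.
  by rewrite segmE; apply: eq_integral => x _; rewrite -EFinN opprK.
have Jlb : (((- m t) * t)%:E <= J)%E.
  have -> : (((- m t) * t)%:E = \int[lebesgue_measure]_(x in `[0%R, t]) (cst (- m t)%:E) x)%E.
    rewrite integral_cst //= (lebesgue_measure_itv (Interval (BLeft 0) (BRight t))) /= lte_fin t0.
    by rewrite oppr0 -EFinD addr0 -EFinM.
  apply: le_ge0_intD => x xD; rewrite lee_fin.
    by rewrite oppr_ge0 ltW.
  by rewrite lerN2; have [] := Dm x xD.
have Jub : (J <= ((- m 0) * t)%:E)%E.
  have -> : (((- m 0) * t)%:E = \int[lebesgue_measure]_(x in `[0%R, t]) (cst (- m 0)%:E) x)%E.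
    rewrite integral_cst //= (lebesgue_measure_itv (Interval (BLeft 0) (BRight t))) /= lte_fin t0.
    by rewrite oppr0 -EFinD addr0 -EFinM.
  apply: le_ge0_intD => x xD; rewrite lee_fin.
    by rewrite oppr_ge0; have [] := Dm x xD; move=> _ mxt; exact: ltW (le_lt_trans mxt mt).
  by rewrite lerN2; have [] := Dm x xD.
rewrite IJ.
have Jfin : J \is a fin_num.
  rewrite fin_numE; apply/andP; split.
    by apply/negP => /eqP Jn; move: Jlb; rewrite Jn leeNy_eq.
  by apply/negP => /eqP Jp; move: Jub; rewrite Jp leye_eq.
rewrite -(fineK Jfin) -EFinN /= oppr_ge0 leNgt => /negP; apply.
apply: lt_le_trans (_ : 0 < (- m t) * t) _; first by rewrite mulr_gt0 // oppr_gt0.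
by rewrite -lee_fin fineK.
Unshelve. all: by end_near.
Qed.
Lemma m_unbdd (R : realType) (m : R -> R) (Phihat : R -> R) :
  (forall x, 0 <= x -> Phihat (conj_Nfunction m x) = x) ->
  forall t, exists s, 0 <= s /\ t < m s.
Proof.
move=> inj t.
apply: contrapT => /forallNP H.
pose t1 := Order.max t 0.
have t10 : 0 <= t1 by rewrite le_max lexx orbT.
have tt1 : t <= t1 by rewrite le_max lexx.
have mb_zero : forall x, t1 <= x -> conj_density m x = 0.
  move=> x t1x; rewrite /conj_density sup_out //.
  move=> [_ [b ub]].
  pose s := Order.max b 0 + 1.
  have s0 : 0 <= s by rewrite addr_ge0 // le_max lexx orbT.
  have : [set s | 0 <= s /\ m s <= x] s.
    split => //.
    have : ~ (t < m s) by move=> ts; apply: (H s).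
    move/negP; rewrite -leNgt => mst.
    exact: le_trans mst (le_trans tt1 t1x).
  move=> /ub; rewrite /s; apply/negP; rewrite -ltNge.
  by rewrite ltr_pwDr // le_max lexx.
have E : conj_Nfunction m t1 = conj_Nfunction m (t1 + 1).
  rewrite /conj_Nfunction; congr fine.
  rewrite integral_mkcond [in RHS]integral_mkcond.
  apply: eq_integral => x _.
  rewrite /patch /segm ger0_norm // ger0_norm ?addr_ge0 //.
  case: ifP => [/set_mem|/negbT/negP xn1]; case: ifP => [/set_mem|/negbT/negP xn2] //=.
  - rewrite in_itv /= => /andP[x0 xt1]; exfalso; apply: xn2; apply/mem_set.
    by rewrite /= in_itv /= x0 (le_trans xt1) // lerDl.
  - rewrite in_itv /= => /andP[x0 xt1].
    rewrite mb_zero //; rewrite leNgt; apply/negP => xt.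
    by apply: xn1; apply/mem_set; rewrite /= in_itv /= x0 ltW.
have := inj t1 t10; have := inj (t1 + 1) (addr_ge0 t10 ler01).
rewrite -E => ->; move=> h; lra.
Qed.

Lemma pointwise (R : realType) (Phi Phihat : R -> R) :
  Nstar_function Phi -> complementary_Nstar Phi Phihat ->
  forall a b : R, 0 <= Phi a * Phihat b <= `|a| + `|b|.
Proof.
move=> [p [_ HP]] [M [m [[iM1 iM2] Mdef mnd mrc [[iB1 iB2] Pev]]]] a b.
have PhiN x : Phi x = Phi `|x|.
  by rewrite (HP x).2 (HP `|x|).2 /segm normr_id.
have PhN x : Phihat x = Phihat `|x|.
  have [x0|x0] := leP 0 x; first by rewrite ger0_norm.
  by rewrite ltr0_norm // Pev.
have m00 : 0 <= m 0.
  apply: (@m0_ge0 R m mnd (mrc 0 (lexx 0))) => t t0.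
  by rewrite -Mdef; have [] := iM2 t t0.
have mge0 s : 0 <= s -> 0 <= m s by move=> s0; apply: le_trans m00 (mnd _ _ (lexx 0) s0).
have munb := @m_unbdd R m Phihat (fun x x0 => (iB1 x x0).2).
have [u0 Mu] := iM1 _ (normr_ge0 a).
have [v0 Mv] := iB2 _ (normr_ge0 b).
rewrite PhiN PhN mulr_ge0 //=.
have := @young R m _ _ mnd mge0 munb u0 v0.
by rewrite -Mdef Mu Mv.
Qed.

Theorem mainTheorem4 (d : measure_display) (T : measurableType d) (R : realType)
  (mu : {measure set T -> \bar R}) (Phi Phihat : R -> R) (f g : T -> R) :
  Nstar_function Phi ->
  complementary_Nstar Phi Phihat ->
  in_LPhi mu Phi f ->
  in_LPhi mu Phihat g ->
  (\int[mu]_x (Phi (f x) * Phihat (g x))%:E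
     <= \int[mu]_x (`|f x|)%:E + \int[mu]_x (`|g x|)%:E)%E.
Proof.
move=> HPhi Hcomp [mf _] [mg _].
have pw := @pointwise R Phi Phihat HPhi Hcomp.
apply: (@le_trans _ _ (\int[mu]_x (`|f x| + `|g x|)%:E)%E).
  apply: le_ge0_int => x; rewrite lee_fin; have /andP[] := pw (f x) (g x) => //.
rewrite (_ : (fun x => (`|f x| + `|g x|)%:E) = (fun x => (`|f x|)%:E + (`|g x|)%:E)%E); last first.
  by apply/funext => x; rewrite EFinD.
rewrite ge0_integralD //.
- apply/measurable_EFinP; apply: measurableT_comp => //; exact: normr_measurable.
- apply/measurable_EFinP; apply: measurableT_comp => //; exact: normr_measurable.
Qed.
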